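(* Let $P$ be a finite poset. The map $\overline{\Lambda}:\mathrm{Hom}(P,\mathbb{N})\to\{\text{monomials of }k[x_P]\}$, $\phi\mapsto\overline{\Lambda}\phi$, is a bijection.
   Context: $\mathbb{N}=\{0,1,\dots\}$; $\mathrm{Hom}(P,\mathbb{N})$ is the set of isotone maps $P\to\mathbb{N}$. The ascent of $\phi$ is $\Lambda\phi=\{(p,i)\in P\times\mathbb{N}:\phi(q)\le i<\phi(p)\ \forall q<p\}$, and $\overline{\Lambda}\phi=\prod_{(p,i)\in\Lambda\phi}x_p$ in the polynomial ring $k[x_P]$ over a field $k$ (monomials of $k[x_P]$ are identified with elements $\sum_p n_pp$ of the free commutative monoid $\mathbb{N}P$). *)

(* Defs.v *)
From HB Require Import structures.
From mathcomp Require Import all_boot all_order.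
Set Implicit Arguments. Unset Strict Implicit. Unset Printing Implicit Defensive.
Import Order.TTheory.

(* Maps P -> N are finite functions
   [{ffun P -> nat}]; a monomial of k[x_P] is identified with an element
   sum_p n_p p of the free commutative monoid NP, i.e. with its exponent
   vector [{ffun P -> nat}]. *)

Section Ascent.
Context {d : Order.disp_t} (P : finPOrderType d).

Definition isotone (f : {ffun P -> nat}) : bool :=
  [forall p : P, forall q : P, (p <= q)%O ==> (f p <= f q)%N].

Definition Hom := {f : {ffun P -> nat} | isotone f}.

Definition ascent (f : {ffun P -> nat}) : pred (P * nat) :=
  fun pi => [forall q : P, (q < pi.1)%O ==> (f q <= pi.2)%N] && (pi.2 < f pi.1)%N.

(* Λ̄φ = ∏_{(p,i) ∈ Λφ} x_p : exponent of x_p is #{i | (p,i) ∈ Λφ}; every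
   such i satisfies i < φ(p), so counting over [0, φ(p)) is exact. *)
Definition ascent_mon (f : {ffun P -> nat}) : {ffun P -> nat} :=
  [ffun p => count (fun i => ascent f (p, i)) (iota 0 (f p))].

Definition Lambda_bar (phi : Hom) : {ffun P -> nat} := ascent_mon (sval phi).

End Ascent.

(* Main.v *)
Require Import Defs.
From mathcomp Require Import all_boot all_order.
From mathcomp Require Import zify.
Set Implicit Arguments. Unset Strict Implicit. Unset Printing Implicit Defensive.
Import Order.TTheory.

Section S.
Context {d : Order.disp_t} (P : finPOrderType d).

Definition mb (f : {ffun P -> nat}) (p : P) : nat := \max_(q | (q < p)%O) f q.

Lemma count_ge m n : count (fun i => m <= i) (iota 0 n) = n - m.
Proof.
elim: n => [|n IH] //.
rewrite -addn1 iotaD count_cat IH /= add0n addn0.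
case: leqP => H; lia.
Qed.

Lemma mb_le (f : {ffun P -> nat}) p : isotone f -> mb f p <= f p.
Proof.
move=> /forallP If; apply/bigmax_leqP => q Hq.
by move: (If q) => /forallP /(_ p) /implyP; apply; apply: ltW.
Qed.

Lemma ascent_monE (f : {ffun P -> nat}) p : ascent_mon f p = f p - mb f p.
Proof.
rewrite ffunE -count_ge; apply: eq_in_count => i; rewrite mem_iota add0n => /andP [_ Hi].
rewrite /ascent /= Hi andbT.
apply/forallP/bigmax_leqP => H.
  by move=> q Hq; move: (H q) => /implyP; apply.
by move=> q; apply/implyP => Hq; apply: H.
Qed.

Lemma card_below (p q : P) : (q < p)%O ->
  #|[set r | (r < q)%O]| < #|[set r | (r < p)%O]|.
Proof.
move=> Hqp; apply: proper_card; apply/properP; split.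
  by apply/subsetP => r; rewrite !inE => Hr; apply: lt_trans Hqp.
by exists q; rewrite !inE ?ltxx.
Qed.

Lemma inj_main (f g : {ffun P -> nat}) : isotone f -> isotone g ->
  ascent_mon f = ascent_mon g -> f = g.
Proof.
move=> If Ig E.
suff H : forall k p, #|[set r | (r < p)%O]| < k -> f p = g p.
  by apply/ffunP => p; apply: (H _ p (ltnSn _)).
elim=> [|k IH] p // Hk.
have Hm : mb f p = mb g p.
  apply: eq_bigr => q Hq; apply: IH.
  by have := card_below Hq; lia.
have := congr1 (fun h : {ffun P -> nat} => h p) E; rewrite /= !ascent_monE Hm.
have := mb_le p If; have := mb_le p Ig; lia.
Qed.

Definition F (n : {ffun P -> nat}) (psi : {ffun P -> nat}) : {ffun P -> nat} :=
  [ffun p => n p + mb psi p].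

Definition phi n := iter #|P| (F n) [ffun => 0].

Lemma iter_stable n k p : #|[set r | (r < p)%O]| < k ->
  iter k (F n) [ffun => 0] p = iter k.+1 (F n) [ffun => 0] p.
Proof.
elim: k p => [|k IH] p // Hk.
rewrite iterS [in RHS]iterS !ffunE; congr (_ + _).
apply: eq_bigr => q Hq; apply: IH.
by have := card_below Hq; lia.
Qed.

Lemma phi_fix n : phi n = F n (phi n).
Proof.
apply/ffunP => p; rewrite /phi -iterS; apply: iter_stable.
rewrite -[X in _ < X]cardsT; apply: proper_card; apply/properP; split.
  by apply/subsetP => r; rewrite inE.
by exists p; rewrite !inE ?ltxx.
Qed.

Lemma phi_iso n : isotone (phi n).
Proof.
apply/forallP => p; apply/forallP => q; apply/implyP.
rewrite le_eqVlt => /orP[/eqP -> //|Hpq].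
have -> : phi n q = F n (phi n) q by rewrite -phi_fix.
rewrite ffunE.
apply: leq_trans _ (leq_addl _ _); rewrite /mb.
by rewrite (bigD1 p) //= leq_maxl.
Qed.

Lemma phi_mon n : ascent_mon (phi n) = n.
Proof.
apply/ffunP => p; rewrite ascent_monE.
have -> : phi n p = F n (phi n) p by rewrite -phi_fix.
by rewrite ffunE addnK.
Qed.

End S.

Theorem proposition3p3 (d : Order.disp_t) (P : finPOrderType d) :
  bijective (@Lambda_bar d P).
Proof.
pose g (n : {ffun P -> nat}) : Hom P := exist _ (phi n) (phi_iso n).
exists g.
  move=> [f If]; apply: val_inj => /=.
  apply: inj_main; [exact: phi_iso | exact: If | by rewrite phi_mon].
by move=> n; rewrite /Lambda_bar /= phi_mon.
Qed.
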